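(* Let $f:\mathbb{R}^d\to\mathbb{R}$ be continuously differentiable, and let $\tilde F_{\ell_1}$ be as defined in the context. Then for every $x\in\mathbb{R}^d$, \[ \mathcal F[\tilde F_{\ell_1}](x)\ \subseteq\ \overline{\operatorname{conv}}\Bigl\{-\,s\,e^{(i)}:\ i\in\mathcal I(x),\ s\in\operatorname{Sign}(\partial_i f(x))\Bigr\}. \]
   Context: $e^{(i)}$ is the $i$-th standard basis vector of $\mathbb{R}^d$; $\operatorname{sign}(u)\in\{-1,0,1\}$ with $\operatorname{sign}(0)=0$; $\operatorname{Sign}(u)=\{1\}$ if $u>0$, $[-1,1]$ if $u=0$, $\{-1\}$ if $u<0$. $\mathcal I(x):=\{i:\ |\partial_i f(x)|=\max_{1\le j\le d}|\partial_j f(x)|\}$. $\tilde F_{\ell_1}:\mathbb{R}^d\to\mathbb{R}^d$ is any function with $\tilde F_{\ell_1}(y)\in\{-\operatorname{sign}(\partial_i f(y))\,e^{(i)}:\ i\in\mathcal I(y)\}$ for all $y$. For $F:\mathbb{R}^d\to\mathbb{R}^d$, the Filippov set is $\mathcal F[F](x):=\bigcap_{\delta>0}\overline{\operatorname{conv}}\{F(y):\ \|y-x\|<\delta\}$. *)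

(* Defs.v *)
From HB Require Import structures.
From mathcomp Require Import all_boot all_order all_algebra.
From mathcomp Require Import all_classical all_reals all_analysis.
Set Implicit Arguments. Unset Strict Implicit. Unset Printing Implicit Defensive.
Import Order.TTheory GRing.Theory Num.Theory.
Import numFieldNormedType.Exports.
Local Open Scope classical_set_scope.
Local Open Scope ring_scope.

(* R^d is modelled as row vectors 'rV[R]_d. *)

Definition ebasis (R : realType) (d : nat) (i : 'I_d) : 'rV[R]_d := delta_mx 0 i.

Definition pderiv (R : realType) (d : nat) (f : 'rV[R]_d -> R) (i : 'I_d)
  (x : 'rV[R]_d) : R := 'D_(ebasis R i) f x.

Definition C1 (R : realType) (d : nat) (f : 'rV[R]_d -> R) : Prop :=
  (forall x, differentiable f x) /\
  (forall i : 'I_d, continuous (fun x => pderiv f i x)).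

Definition maxidx (R : realType) (d : nat) (f : 'rV[R]_d -> R) (x : 'rV[R]_d)
  : set 'I_d :=
  [set i | `|pderiv f i x| = \big[Num.max/0]_(j < d) `|pderiv f j x| ].

Definition Sgn (R : realType) (u : R) : set R :=
  [set s | (0 < u -> s = 1) /\ (u = 0 -> -1 <= s <= 1) /\ (u < 0 -> s = -1)].

Definition conv_hull (R : realType) (d : nat) (A : set 'rV[R]_d) : set 'rV[R]_d :=
  [set v | exists (n : nat) (w : 'I_n -> R) (p : 'I_n -> 'rV[R]_d),
     (forall k, 0 <= w k) /\ \sum_(k < n) w k = 1 /\ (forall k, A (p k)) /\
     v = \sum_(k < n) w k *: p k].

Definition cl_conv (R : realType) (d : nat) (A : set 'rV[R]_d) : set 'rV[R]_d :=
  closure (conv_hull A).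

Definition filippov (R : realType) (d : nat) (F : 'rV[R]_d -> 'rV[R]_d)
  (x : 'rV[R]_d) : set 'rV[R]_d :=
  \bigcap_(delta in [set e : R | 0 < e])
     cl_conv [set F y | y in [set y | `|y - x| < delta]].

(* F is a selection of the l1 steepest descent direction *)
Definition is_Ftilde_l1 (R : realType) (d : nat) (f : 'rV[R]_d -> R)
  (F : 'rV[R]_d -> 'rV[R]_d) : Prop :=
  forall y, exists i, maxidx f y i /\
    F y = - ((Num.sg (pderiv f i y)) *: ebasis R i).

(* Main.v *)
Require Import Defs.
From HB Require Import structures.
From mathcomp Require Import all_boot all_order all_algebra.
From mathcomp Require Import all_classical all_reals all_analysis.
From mathcomp Require Import lra.
Import Order.TTheory GRing.Theory Num.Theory.
Import numFieldNormedType.Exports.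
Local Open Scope classical_set_scope.
Local Open Scope ring_scope.

Theorem lemma4p1 (R : realType) (d : nat) (f : 'rV[R]_d -> R)
  (F : 'rV[R]_d -> 'rV[R]_d) :
  C1 f -> is_Ftilde_l1 f F ->
  forall x : 'rV[R]_d,
    filippov F x `<=`
    cl_conv [set v | exists i s, maxidx f x i /\ Sgn (pderiv f i x) s /\
                                 v = - (s *: ebasis R i)].
Proof.
move=> [_ Hc] HF x.
set p := pderiv f.
have key : forall j, \forall y \near x, maxidx f y j ->
    maxidx f x j /\ Sgn (p j x) (Num.sg (p j y)).
  move=> j.
  have Hsg : \forall y \near x, Sgn (p j x) (Num.sg (p j y)).
    case: (ltrgt0P (p j x)) => h.
    - apply: filterS (cvgr_gt _ (Hc j x) _ h) => y hy.
      split; first by move=> _; rewrite gtr0_sg.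
      by split=> h'; exfalso; move: h h'; lra.
    - apply: filterS (cvgr_lt _ (Hc j x) _ h) => y hy.
      split; first by move=> h'; exfalso; move: h h'; lra.
      split; first by move=> h'; exfalso; move: h h'; lra.
      by move=> _; rewrite ltr0_sg.
    - apply: filterS (cvgr_gt _ (Hc j x) (-1) _); last by move: h; rewrite /p => ->; exact: ltrN10.
      move=> y _; split; first by rewrite h ltxx.
      split; last by rewrite h ltxx.
      by move=> _; rewrite -ler_norml normr_sg; case: (_ != 0); rewrite ?ler01 ?lexx.
  have [hj|hj] := pselect (maxidx f x j).
    by apply: filterS Hsg => y hy _.
  have [k hk] : exists k, `|p j x| < `|p k x|.
    apply/not_existsP => hn; apply: hj; rewrite /maxidx /=.
    apply/eqP; rewrite eq_le; apply/andP; split; first exact: le_bigmax.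
    apply: bigmax_le => // i _; move: (hn i); rewrite ltNge => /negP.
    by case: (leP `|p i x| `|p j x|).
  have FF : Filter (nbhs x) by exact: nbhs_filter.
  have Hk := @cvgB _ _ _ (nbhs x) FF _ _ _ _
    (@cvg_norm _ _ _ (nbhs x) FF _ _ (Hc k x))
    (@cvg_norm _ _ _ (nbhs x) FF _ _ (Hc j x)).
  have := cvgr_gt _ Hk 0; rewrite subr_gt0 => /(_ FF hk).
  apply: filterS => y /=; rewrite subr_gt0 => hy hm; exfalso.
  move: hm; rewrite /maxidx /= => hm.
  have : `|p k y| <= \big[Num.max/0]_(i < d) `|p i y| by exact: le_bigmax.
  rewrite /p -hm.
  by rewrite leNgt hy.
have FF : Filter (nbhs x) by exact: nbhs_filter.
have key2 := @filter_forall _ _ (fun j y => maxidx f y j ->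
    maxidx f x j /\ Sgn (p j x) (Num.sg (p j y))) (nbhs x) FF key.
have [e /= e0 He] := (nbhs_ballP _ _).1 key2.
move=> z Hz; have {}Hz := Hz e e0.
apply: closureS Hz => v [n [w [q [h1 [h2 [h3 ->]]]]]].
exists n, w, q; split=> //; split=> //; split=> // k.
have [y hy hqk] := h3 k.
have [i [hi hFy]] := HF y.
rewrite -hqk hFy.
have hb : ball x e y.
  rewrite -ball_normE /ball_ /= distrC; exact: hy.
have [hix hs] := He y hb i hi.
exists i, (Num.sg (p i y)); split; first exact: hix.
split; first exact: hs.
reflexivity.
Qed.
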